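(* Let $(X,\mu)$ be an irreducible discrete-time BRW with global survival, i.e. $\bar q(x)<1$ for all $x\in X$. Then there exist $x,y\in X$ with $q(x,y)\neq\bar q(x)$ (no strong local survival) if and only if there exist a finite nonempty set $A\subseteq X$ and $v\in[0,1]^X$ with $v\ge\bar q$ such that $G(v|x)\ge v(x)$ for all $x\in X\setminus A$, and $(\tau v)(x_0)>\max_{x\in A}(\tau v)(x)$ for some $x_0\in X\setminus A$, where $(\tau v)(x):=\frac{v(x)-\bar q(x)}{1-\bar q(x)}$.
   Context: $S_X:=\{f:X\to\mathbb N:\sum_yf(y)<\infty\}$, $X$ finite or countable. A discrete-time BRW $(X,\mu)$: probability measures $\mu_x$ on $S_X$; each particle at $x$ is independently replaced by $f(y)$ particles at each $y$, $f\sim\mu_x$. First moments $m_{xy}:=\sum_ff(y)\mu_x(f)$ with $\sup_x\sum_ym_{xy}<\infty$; irreducible means every $y$ is reachable from every $x$ via a path with $m_{x_ix_{i+1}}>0$. Generating function $G(z|x):=\sum_f\mu_x(f)\prod_yz(y)^{f(y)}$. Standing assumption: in every class of mutually reachable vertices there is a vertex at which a particle has, with positive probability, a number of children inside the class different from one. $q(x,y)$: probability starting from one particle at $x$ that eventually no particle is at $y$; $\bar q(x)$: probability of eventual total extinction. *)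

(* Defs.v *)
From Stdlib Require Import Reals List ClassicalEpsilon ClassicalDescription Relations.
Open Scope R_scope.

Set Implicit Arguments.

(* Value of a convergent series sum_{k>=0} u k (junk if not convergent). *)
Definition sumR (u : nat -> R) : R :=
  epsilon (inhabits 0) (fun l => infinite_sum u l).

(* Limit of a convergent real sequence (junk if not convergent). *)
Definition limR (u : nat -> R) : R :=
  epsilon (inhabits 0) (fun l => Un_cv u l).

Definition ind (P : Prop) : R :=
  if excluded_middle_informative P then 1 else 0.

Fixpoint countP (X : Type) (P : X -> Prop) (l : list X) : nat :=
  match l with
  | nil => 0%nat
  | c :: l' => ((if excluded_middle_informative (P c) then 1 else 0) + countP P l')%nat
  end.

Fixpoint prodR (l : list R) : R :=
  match l with nil => 1 | a :: l' => a * prodR l' end.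

(* An element f of S_X (finitely supported X -> N) is represented by a
   finite list of positions of children: f(y) = number of occurrences
   of y in the list.  The law mu_x on the countable set S_X is given as
   a discrete measure  mu_x = sum_k p x k * delta_{ch x k}
   (every probability measure on the countable set S_X has this form). *)

Record BRW (X : Type) := {
  p  : X -> nat -> R;
  ch : X -> nat -> list X
}.

Section BRWdefs.
Variable X : Type.
Variable eqdec : forall x y : X, {x = y} + {x <> y}.
Variable mu : BRW X.

Definition nchild (x : X) (k : nat) (y : X) : nat :=
  count_occ eqdec (ch mu x k) y.

Definition is_prob_law : Prop :=
  forall x, (forall k, 0 <= p mu x k) /\ infinite_sum (p mu x) 1.

Definition m_term (x y : X) (k : nat) : R := p mu x k * INR (nchild x k y).

Definition m (x y : X) : R := sumR (m_term x y).

Definition bounded_moments : Prop :=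
  (forall x y, exists l, infinite_sum (m_term x y) l) /\
  exists M : R, forall x (ys : list X), NoDup ys ->
    fold_right Rplus 0 (map (m x) ys) <= M.

Definition reach : X -> X -> Prop :=
  clos_refl_trans X (fun a b => 0 < m a b).

Definition irreducible : Prop := forall x y, reach x y.

Definition probk (w : X) (E : list X -> Prop) : R :=
  sumR (fun k => p mu w k * ind (E (ch mu w k))).

Definition standing_assumption : Prop :=
  forall x, exists w, reach x w /\ reach w x /\
    0 < probk w (fun l => countP (fun c => reach x c /\ reach c x) l <> 1%nat).

Definition G (z : X -> R) (x : X) : R :=
  sumR (fun k => p mu x k * prodR (map z (ch mu x k))).

Fixpoint Gn (n : nat) (z : X -> R) : X -> R :=
  match n with
  | O => z
  | S n' => G (Gn n' z)
  end.

(* bar q(x) = P_x(total extinction) = lim_n P_x(no particle at time n)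
            = lim_n G^{(n)}(0|x). *)
Definition qbar (x : X) : R := limR (fun n => Gn n (fun _ => 0) x).

(* F y N w = P_w(no particle at y at any of the times 0,...,N):
   F y 0 w = [w <> y],  F y (N+1) w = [w <> y] * G(F y N | w). *)
Fixpoint F (y : X) (N : nat) : X -> R :=
  match N with
  | O => fun w => ind (w <> y)
  | S N' => fun w => ind (w <> y) * G (F y N') w
  end.

(* q(x,y) = P_x(eventually no particle at y)
          = lim_n P_x(no particle at y at any time >= n)
          = lim_n lim_N P_x(no particle at y at times n,...,n+N)
          = lim_n lim_N G^{(n)}(F y N | x). *)
Definition q (x y : X) : R :=
  limR (fun n => limR (fun N => Gn n (F y N) x)).

Definition tau (v : X -> R) (x : X) : R := (v x - qbar x) / (1 - qbar x).

End BRWdefs.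

(* Main.v *)
Require Import Defs.
From Stdlib Require Import Reals List Lra Lia ClassicalEpsilon Classical FunctionalExtensionality.
Open Scope R_scope.

Lemma sumR_eq (u : nat -> R) l : infinite_sum u l -> sumR u = l.
Proof.
  intro H. unfold sumR.
  assert (E := epsilon_spec (inhabits 0) (fun l => infinite_sum u l) (ex_intro _ l H)).
  exact (uniqueness_sum _ _ _ E H).
Qed.

Lemma limR_eq (u : nat -> R) l : Un_cv u l -> limR u = l.
Proof.
  intro H. unfold limR.
  assert (E := epsilon_spec (inhabits 0) (fun l => Un_cv u l) (ex_intro _ l H)).
  exact (UL_sequence _ _ _ E H).
Qed.

Lemma cv_const (c : R) : Un_cv (fun _ => c) c.
Proof. intros eps He. exists 0%nat. intros. unfold Rdist. rewrite Rminus_diag, Rabs_R0. lra. Qed.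

Lemma cv_shift (u : nat -> R) l k : Un_cv u l -> Un_cv (fun n => u (n + k)%nat) l.
Proof. intros H eps He. destruct (H eps He) as [N HN]. exists N. intros n Hn. apply HN. lia. Qed.

Lemma cv_shift1 (u : nat -> R) l : Un_cv u l -> Un_cv (fun n => u (S n)) l.
Proof. intros H eps He. destruct (H eps He) as [N HN]. exists N. intros n Hn. apply HN. lia. Qed.

Lemma cv_le_const (u : nat -> R) l c : (forall n, u n <= c) -> Un_cv u l -> l <= c.
Proof. intros H Hc. apply (@Rle_cv_lim u (fun _ => c) l c H Hc (cv_const c)). Qed.

Lemma cv_ge_const (u : nat -> R) l c : (forall n, c <= u n) -> Un_cv u l -> c <= l.
Proof. intros H Hc. apply (@Rle_cv_lim (fun _ => c) u c l H (cv_const c) Hc). Qed.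

Lemma cv_lin (a b : nat -> R) la lb s t :
  Un_cv a la -> Un_cv b lb -> Un_cv (fun n => s * a n + t * b n) (s * la + t * lb).
Proof.
  intros Ha Hb. apply CV_plus; apply CV_mult; auto; apply cv_const.
Qed.

Lemma series_lin (a b : nat -> R) la lb s t :
  infinite_sum a la -> infinite_sum b lb ->
  infinite_sum (fun k => s * a k + t * b k) (s * la + t * lb).
Proof.
  intros Ha Hb.
  assert (E : forall n, sum_f_R0 (fun k => s * a k + t * b k) n =
     s * sum_f_R0 a n + t * sum_f_R0 b n).
  { intro n. rewrite sum_plus, !scal_sum. f_equal; apply sum_eq; intros; ring. }
  intros eps He. destruct (cv_lin _ _ _ _ s t Ha Hb eps He) as [N HN].
  exists N. intros n Hn. rewrite E. apply HN; auto.
Qed.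

Lemma series_le (a b : nat -> R) la lb :
  (forall k, a k <= b k) -> infinite_sum a la -> infinite_sum b lb -> la <= lb.
Proof.
  intros H Ha Hb. apply (@Rle_cv_lim (sum_f_R0 a) (sum_f_R0 b)); auto.
  intro n. apply sum_Rle. auto.
Qed.

Lemma squeeze (a u b : nat -> R) l :
  (forall n, a n <= u n <= b n) -> Un_cv a l -> Un_cv b l -> Un_cv u l.
Proof.
  intros H Ha Hb eps He. destruct (Ha eps He) as [N1 H1]. destruct (Hb eps He) as [N2 H2].
  exists (N1 + N2)%nat. intros n Hn. specialize (H1 n ltac:(lia)). specialize (H2 n ltac:(lia)).
  specialize (H n). unfold Rdist in *. apply Rabs_def2 in H1. apply Rabs_def2 in H2.
  apply Rabs_def1; lra.
Qed.

Lemma abs_le_inv a b : Rabs a <= b -> - b <= a <= b.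
Proof. intro H. pose proof (Rle_abs a). pose proof (Rle_abs (- a)). rewrite Rabs_Ropp in *. lra. Qed.

Lemma partial_diff (a b : nat -> R) K d :
  (forall k, Rabs (a k) <= b k) ->
  Rabs (sum_f_R0 a (K + d) - sum_f_R0 a K) <= sum_f_R0 b (K + d) - sum_f_R0 b K.
Proof.
  intro H. induction d.
  - rewrite Nat.add_0_r. unfold Rminus. rewrite Rplus_opp_r, Rabs_R0. lra.
  - replace (K + S d)%nat with (S (K + d)) by lia. simpl.
    specialize (H (S (K + d))).
    replace (sum_f_R0 a (K + d) + a (S (K + d)) - sum_f_R0 a K) with
      ((sum_f_R0 a (K + d) - sum_f_R0 a K) + a (S (K + d))) by ring.
    eapply Rle_trans. apply Rabs_triang. lra.
Qed.

Lemma tail_bound (a b : nat -> R) la lb K :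
  (forall k, Rabs (a k) <= b k) -> infinite_sum a la -> infinite_sum b lb ->
  Rabs (la - sum_f_R0 a K) <= lb - sum_f_R0 b K.
Proof.
  intros H Ha Hb. apply Rle_plus_epsilon. intros e He.
  destruct (Ha e He) as [N HN].
  assert (Hbn : forall k, 0 <= b k). { intro k. specialize (H k). pose proof (Rabs_pos (a k)). lra. }
  assert (Hg : Un_growing (sum_f_R0 b)). { intro n. simpl. specialize (Hbn (S n)). lra. }
  pose proof (growing_ineq _ _ Hg Hb (K + N)) as Hl.
  specialize (HN (K + N)%nat ltac:(lia)). unfold Rdist in HN.
  pose proof (partial_diff a b K N H) as Hd.
  replace (la - sum_f_R0 a K) with ((sum_f_R0 a (K + N) - sum_f_R0 a K) - (sum_f_R0 a (K + N) - la)) by ring.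
  eapply Rle_trans. apply Rabs_triang. rewrite Rabs_Ropp. lra.
Qed.

Lemma finite_sum_cv (u : nat -> nat -> R) (w : nat -> R) K :
  (forall k, Un_cv (fun m => u m k) (w k)) ->
  Un_cv (fun m => sum_f_R0 (u m) K) (sum_f_R0 w K).
Proof.
  intro H. induction K.
  - simpl. apply H.
  - simpl. apply CV_plus; auto.
Qed.

Lemma dom_cv (u : nat -> nat -> R) (w b lu : nat -> R) (lb lw : R) :
  (forall m k, Rabs (u m k) <= b k) -> infinite_sum b lb ->
  (forall k, Un_cv (fun m => u m k) (w k)) ->
  (forall m, infinite_sum (u m) (lu m)) -> infinite_sum w lw ->
  Un_cv lu lw.
Proof.
  intros Hb Hlb Hcv Hu Hw eps He.
  assert (Hbn : forall k, 0 <= b k). { intro k. specialize (Hb 0%nat k). pose proof (Rabs_pos (u 0%nat k)). lra. }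
  assert (Hwb : forall k, Rabs (w k) <= b k).
  { intro k. apply Rabs_le. split.
    - apply (cv_ge_const (fun m => u m k)); auto. intro m. specialize (Hb m k). apply abs_le_inv in Hb. lra.
    - apply (cv_le_const (fun m => u m k)); auto. intro m. specialize (Hb m k). apply abs_le_inv in Hb. lra. }
  destruct (Hlb (eps / 4) ltac:(lra)) as [K HK]. specialize (HK K (le_n K)).
  assert (Hg : Un_growing (sum_f_R0 b)). { intro n. simpl. specialize (Hbn (S n)). lra. }
  pose proof (growing_ineq _ _ Hg Hlb K) as Hl. unfold Rdist in HK. rewrite Rabs_left1 in HK by lra.
  destruct (finite_sum_cv u w K Hcv (eps / 4) ltac:(lra)) as [N HN].
  exists N. intros m Hm. specialize (HN m Hm). unfold Rdist in *.
  pose proof (tail_bound (u m) b (lu m) lb K (Hb m) (Hu m) Hlb) as T1.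
  pose proof (tail_bound w b lw lb K Hwb Hw Hlb) as T2.
  replace (lu m - lw) with ((lu m - sum_f_R0 (u m) K) + (sum_f_R0 (u m) K - sum_f_R0 w K) - (lw - sum_f_R0 w K)) by ring.
  eapply Rle_lt_trans. apply Rabs_triang. rewrite Rabs_Ropp.
  eapply Rle_lt_trans. apply Rplus_le_compat_r. apply Rabs_triang. lra.
Qed.

Section Gen.
Variable X : Type.

Definition inS (z : X -> R) := forall x, 0 <= z x <= 1.
Definition fle (z z' : X -> R) := forall x, z x <= z' x.
Definition cmb (t : R) (z0 z1 : X -> R) := fun x => t * z0 x + (1 - t) * z1 x.

Lemma cmb_inS t z0 z1 : 0 <= t <= 1 -> inS z0 -> inS z1 -> inS (cmb t z0 z1).
Proof. intros Ht H0 H1 x. unfold cmb. specialize (H0 x). specialize (H1 x). nra. Qed.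

Record goodT (T : (X -> R) -> (X -> R)) : Prop := {
  gpres : forall z, inS z -> inS (T z);
  gmono : forall z z', inS z -> inS z' -> fle z z' -> fle (T z) (T z');
  gconv : forall z0 z1 t, inS z0 -> inS z1 -> fle z1 z0 -> 0 <= t <= 1 ->
           fle (T (cmb t z0 z1)) (cmb t (T z0) (T z1));
  gcont : forall (z : nat -> X -> R) zi, (forall m, inS (z m)) -> inS zi ->
           (forall x, Un_cv (fun m => z m x) (zi x)) ->
           forall x, Un_cv (fun m => T (z m) x) (T zi x)
}.

Fixpoint iterT (T : (X -> R) -> (X -> R)) (n : nat) (z : X -> R) : X -> R :=
  match n with O => z | S n' => T (iterT T n' z) end.

Lemma iter_add T n m z : iterT T (n + m) z = iterT T n (iterT T m z).
Proof. induction n; simpl; auto. rewrite IHn. auto. Qed.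

Lemma iter_good T : goodT T -> forall n, goodT (iterT T n).
Proof.
  intros [Hp Hm Hc Hk] n. induction n as [|n [Ip Im Ic Ik]]; simpl.
  - constructor; auto. intros z0 z1 t _ _ _ _ x. lra.
  - constructor.
    + auto.
    + intros z z' Hz Hz' Hl. apply Hm; auto.
    + intros z0 z1 t H0 H1 Hl Ht.
      assert (S0 := Ip _ H0). assert (S1 := Ip _ H1).
      intro x. eapply Rle_trans.
      * apply (Hm (iterT T n (cmb t z0 z1)) (cmb t (iterT T n z0) (iterT T n z1))).
        -- apply Ip. apply cmb_inS; auto.
        -- apply cmb_inS; auto.
        -- apply Ic; auto.
      * apply Hc; auto.
    + intros z zi Hz Hzi Hcv. apply Hk; auto.
Qed.

End Gen.
Arguments inS {X}. Arguments fle {X}. Arguments cmb {X}.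

Section BRWG.
Variable X : Type.
Variable mu : BRW X.
Hypothesis Hprob : is_prob_law mu.

Lemma prod_bounds (z : X -> R) l : inS z -> 0 <= prodR (map z l) <= 1.
Proof.
  intro Hz. induction l as [|a l IH]; simpl. lra.
  specialize (Hz a). nra.
Qed.

Lemma prod_mono (z z' : X -> R) l : inS z -> inS z' -> fle z z' ->
  prodR (map z l) <= prodR (map z' l).
Proof.
  intros Hz Hz' Hl. induction l as [|a l IH]; simpl. lra.
  pose proof (prod_bounds z l Hz). specialize (Hz a). specialize (Hl a).
  apply Rmult_le_compat; lra.
Qed.

Lemma prod_conv (z0 z1 : X -> R) t l : inS z0 -> inS z1 -> fle z1 z0 -> 0 <= t <= 1 ->
  prodR (map (cmb t z0 z1) l) <= t * prodR (map z0 l) + (1 - t) * prodR (map z1 l).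
Proof.
  intros H0 H1 Hl Ht. induction l as [|a l IH]; simpl. lra.
  unfold cmb at 1.
  pose proof (prod_mono z1 z0 l H1 H0 Hl) as Hm.
  pose proof (prod_bounds z1 l H1). pose proof (prod_bounds z0 l H0).
  specialize (H0 a). specialize (H1 a). specialize (Hl a).
  set (P0 := prodR (map z0 l)) in *. set (P1 := prodR (map z1 l)) in *.
  set (Pt := prodR (map (cmb t z0 z1) l)) in *.
  assert (Hc : 0 <= t * z0 a + (1 - t) * z1 a) by nra.
  apply Rle_trans with ((t * z0 a + (1 - t) * z1 a) * (t * P0 + (1 - t) * P1)).
  - apply Rmult_le_compat_l; auto.
  - assert (0 <= t * (1 - t) * ((z0 a - z1 a) * (P0 - P1))).
    { apply Rmult_le_pos. nra. apply Rmult_le_pos; lra. }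
    nra.
Qed.

Lemma prod_cont (z : nat -> X -> R) zi l :
  (forall x, Un_cv (fun m => z m x) (zi x)) ->
  Un_cv (fun m => prodR (map (z m) l)) (prodR (map zi l)).
Proof.
  intro H. induction l as [|a l IH]; simpl. apply cv_const.
  apply CV_mult; auto.
Qed.

Definition gterm (z : X -> R) x k := p mu x k * prodR (map z (ch mu x k)).

Lemma gterm_bounds z x k : inS z -> 0 <= gterm z x k <= p mu x k.
Proof.
  intro Hz. unfold gterm. destruct (Hprob x) as [Hp _]. specialize (Hp k).
  pose proof (prod_bounds z (ch mu x k) Hz). nra.
Qed.

Lemma G_series z x : inS z -> infinite_sum (gterm z x) (G mu z x).
Proof.
  intro Hz. destruct (Hprob x) as [Hp H1].
  destruct (Rseries_CV_comp (gterm z x) (p mu x)) as [l Hl].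
  - intro n. apply gterm_bounds; auto.
  - exists 1. exact H1.
  - unfold G. fold (gterm z x). rewrite (sumR_eq _ l Hl). exact Hl.
Qed.

Lemma G_good : goodT X (G mu).
Proof.
  constructor.
  - intros z Hz x. destruct (Hprob x) as [Hp H1]. pose proof (G_series z x Hz) as HG. split.
    + apply (series_le (fun _ => 0) (gterm z x) 0); auto.
      * intro k. apply gterm_bounds; auto.
      * intros e He. exists 0%nat. intros. unfold Rdist.
        rewrite sum_eq_R0 by auto. rewrite Rminus_0_r, Rabs_R0. lra.
    + apply (series_le (gterm z x) (p mu x)); auto.
      intro k. apply gterm_bounds; auto.
  - intros z z' Hz Hz' Hl x. apply (series_le (gterm z x) (gterm z' x)); try apply G_series; auto.
    intro k. unfold gterm. destruct (Hprob x) as [Hp _]. apply Rmult_le_compat_l; auto.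
    apply prod_mono; auto.
  - intros z0 z1 t H0 H1 Hl Ht x. unfold cmb at 2.
    apply (series_le (gterm (cmb t z0 z1) x) (fun k => t * gterm z0 x k + (1 - t) * gterm z1 x k)).
    + intro k. unfold gterm. destruct (Hprob x) as [Hp _]. specialize (Hp k).
      pose proof (prod_conv z0 z1 t (ch mu x k) H0 H1 Hl Ht). nra.
    + apply G_series. apply cmb_inS; auto.
    + apply series_lin; apply G_series; auto.
  - intros z zi Hz Hzi Hcv x. destruct (Hprob x) as [Hp H1].
    apply (dom_cv (fun m => gterm (z m) x) (gterm zi x) (p mu x) (fun m => G mu (z m) x) 1).
    + intros m k. pose proof (gterm_bounds (z m) x k (Hz m)). rewrite Rabs_pos_eq; lra.
    + exact H1.
    + intro k. unfold gterm. apply CV_mult. apply cv_const. apply prod_cont; auto.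
    + intro m. apply G_series; auto.
    + apply G_series; auto.
Qed.

Lemma G_one x : G mu (fun _ => 1) x = 1.
Proof.
  unfold G. destruct (Hprob x) as [_ H1]. apply sumR_eq.
  assert (E : (fun k => p mu x k * prodR (map (fun _ : X => 1) (ch mu x k))) = p mu x).
  { apply functional_extensionality. intro k. induction (ch mu x k) as [|a l IH]; simpl. ring.
    simpl in IH. nra. }
  rewrite E. exact H1.
Qed.

End BRWG.

Lemma grow_cv (u : nat -> R) c : (forall n, u n <= u (S n)) -> (forall n, u n <= c) ->
  Un_cv u (limR u).
Proof.
  intros Hg Hb. destruct (growing_cv u Hg) as [l Hl].
  - exists c. intros x [i ->]. auto.
  - rewrite (limR_eq u l Hl). exact Hl.
Qed.

Lemma decr_cv (u : nat -> R) c : (forall n, u (S n) <= u n) -> (forall n, c <= u n) ->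
  Un_cv u (limR u).
Proof.
  intros Hg Hb. assert (H := grow_cv (fun n => - u n) (- c)).
  assert (Hc : Un_cv (fun n => - u n) (limR (fun n => - u n))).
  { apply H; intro n. specialize (Hg n). lra. specialize (Hb n). lra. }
  assert (Hc' : Un_cv u (- limR (fun n => - u n))).
  { intros e He. destruct (Hc e He) as [N HN]. exists N. intros n Hn. specialize (HN n Hn).
    unfold Rdist in *. replace (u n - - limR (fun n => - u n)) with (- (- u n - limR (fun n => - u n))) by ring.
    rewrite Rabs_Ropp. auto. }
  rewrite (limR_eq u _ Hc'). exact Hc'.
Qed.

Lemma ind_bounds (Q : Prop) : 0 <= Defs.ind Q <= 1.
Proof. unfold Defs.ind. destruct (ClassicalDescription.excluded_middle_informative Q); lra. Qed.
Lemma ind_true (Q : Prop) : Q -> Defs.ind Q = 1.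
Proof. intro H. unfold Defs.ind. destruct (ClassicalDescription.excluded_middle_informative Q); tauto. Qed.
Lemma ind_false (Q : Prop) : ~ Q -> Defs.ind Q = 0.
Proof. intro H. unfold Defs.ind. destruct (ClassicalDescription.excluded_middle_informative Q); tauto. Qed.

Section BRWF.
Variable X : Type.
Variable mu : BRW X.
Hypothesis Hprob : is_prob_law mu.

Let GG := G_good X mu Hprob.
Let Gi := iterT X (G mu).
Let IG n := iter_good X (G mu) GG n.

Lemma Gn_iter n z : Gn mu n z = Gi n z.
Proof. induction n; simpl; auto. rewrite IHn. auto. Qed.

Lemma zero_inS : inS (fun _ : X => 0).
Proof. intro; lra. Qed.
Lemma one_inS : inS (fun _ : X => 1).
Proof. intro; lra. Qed.

Lemma Gn_inS n z : inS z -> inS (Gn mu n z).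
Proof. intro Hz. rewrite Gn_iter. apply (gpres _ _ (IG n)); auto. Qed.

Lemma Gn0_grow n x : Gn mu n (fun _ => 0) x <= Gn mu (S n) (fun _ => 0) x.
Proof.
  revert x. induction n; intro x.
  - simpl. apply (gpres _ _ GG). apply zero_inS.
  - change (G mu (Gn mu n (fun _ => 0)) x <= G mu (Gn mu (S n) (fun _ => 0)) x).
    apply (gmono _ _ GG); try apply Gn_inS; try apply zero_inS. intro; auto.
Qed.

Lemma qbar_cv x : Un_cv (fun n => Gn mu n (fun _ => 0) x) (qbar mu x).
Proof.
  apply (grow_cv _ 1). intro n. apply Gn0_grow. intro n. apply (Gn_inS n _ zero_inS x).
Qed.

Lemma qbar_inS : inS (qbar mu).
Proof.
  intro x. split.
  - apply (cv_ge_const _ _ 0 (fun n => proj1 (Gn_inS n _ zero_inS x)) (qbar_cv x)).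
  - apply (cv_le_const _ _ 1 (fun n => proj2 (Gn_inS n _ zero_inS x)) (qbar_cv x)).
Qed.

Lemma qbar_fix x : G mu (qbar mu) x = qbar mu x.
Proof.
  apply (UL_sequence (fun n => G mu (Gn mu n (fun _ => 0)) x)).
  - apply (gcont _ _ GG); auto. intro m; apply Gn_inS, zero_inS. apply qbar_inS.
    apply qbar_cv.
  - apply (cv_shift1 (fun n => Gn mu n (fun _ => 0) x)). apply qbar_cv.
Qed.

Lemma Gi_qbar n x : Gi n (qbar mu) x = qbar mu x.
Proof.
  revert x; induction n; intro x. reflexivity.
  change (G mu (Gi n (qbar mu)) x = qbar mu x).
  replace (Gi n (qbar mu)) with (qbar mu). apply qbar_fix.
  apply functional_extensionality. intro; symmetry; apply IHn.
Qed.

Lemma F_inS y N : inS (F mu y N).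
Proof.
  induction N; intro x; simpl.
  - apply ind_bounds.
  - pose proof (ind_bounds (x <> y)). pose proof (gpres _ _ GG _ IHN x). nra.
Qed.

Lemma F_dec y N : fle (F mu y (S N)) (F mu y N).
Proof.
  induction N; intro x.
  - simpl. pose proof (ind_bounds (x <> y)). pose proof (gpres _ _ GG _ (F_inS y 0) x). simpl in *. nra.
  - change (Defs.ind (x <> y) * G mu (F mu y (S N)) x <= Defs.ind (x <> y) * G mu (F mu y N) x).
    apply Rmult_le_compat_l. apply ind_bounds.
    apply (gmono _ _ GG); auto; apply F_inS.
Qed.

Lemma F_le_G y N : fle (F mu y (S N)) (G mu (F mu y N)).
Proof.
  intro x. simpl. pose proof (ind_bounds (x <> y)). pose proof (gpres _ _ GG _ (F_inS y N) x). nra.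
Qed.

Definition fl (y : X) (x : X) := limR (fun N => F mu y N x).

Lemma fl_cv y x : Un_cv (fun N => F mu y N x) (fl y x).
Proof. apply (decr_cv _ 0). intro n. apply F_dec. intro n. apply (F_inS y n x). Qed.

Lemma fl_inS y : inS (fl y).
Proof.
  intro x. split.
  - apply (cv_ge_const _ _ 0 (fun n => proj1 (F_inS y n x)) (fl_cv y x)).
  - apply (cv_le_const _ _ 1 (fun n => proj2 (F_inS y n x)) (fl_cv y x)).
Qed.

Lemma fl_self y : fl y y = 0.
Proof.
  apply (UL_sequence (fun N => F mu y N y)). apply fl_cv.
  replace (fun N => F mu y N y) with (fun _ : nat => 0). apply cv_const.
  apply functional_extensionality. intro N. destruct N; simpl; rewrite ind_false by tauto; ring.
Qed.

Lemma G_Fcv y x : Un_cv (fun N => G mu (F mu y N) x) (G mu (fl y) x).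
Proof. apply (gcont _ _ GG). apply F_inS. apply fl_inS. apply fl_cv. Qed.

Lemma fl_fix y x : x <> y -> G mu (fl y) x = fl y x.
Proof.
  intro Hxy. apply (UL_sequence (fun N => G mu (F mu y N) x)). apply G_Fcv.
  replace (fun N => G mu (F mu y N) x) with (fun N => F mu y (S N) x).
  apply (cv_shift1 (fun N => F mu y N x)). apply fl_cv.
  apply functional_extensionality. intro N. simpl. rewrite ind_true by auto. ring.
Qed.

Lemma fl_sub y : fle (fl y) (G mu (fl y)).
Proof.
  intro x. apply (@Rle_cv_lim (fun N => F mu y (S N) x) (fun N => G mu (F mu y N) x)).
  intro N; apply F_le_G. apply (cv_shift1 (fun N => F mu y N x)). apply fl_cv. apply G_Fcv.
Qed.

Lemma q_repr x y : q mu x y = limR (fun n => Gi n (fl y) x).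
Proof.
  unfold q. f_equal. apply functional_extensionality. intro n.
  apply limR_eq.
  replace (fun N => Gn mu n (F mu y N) x) with (fun N => Gi n (F mu y N) x).
  apply (gcont _ _ (IG n)). apply F_inS. apply fl_inS. apply fl_cv.
  apply functional_extensionality. intro; rewrite Gn_iter; auto.
Qed.

End BRWF.

Lemma div_le_inv u d M : 0 < d -> u / d <= M -> u <= M * d.
Proof. intros Hd H. replace u with ((u / d) * d) by (field; lra). apply Rmult_le_compat_r; lra. Qed.
Lemma div_gt_inv u d M : 0 < d -> M < u / d -> M * d < u.
Proof. intros Hd H. replace u with ((u / d) * d) by (field; lra). apply Rmult_lt_compat_r; lra. Qed.

Lemma fold_max_ge {T} (f : T -> R) l b : In b l -> f b <= fold_right Rmax 0 (map f l).
Proof.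
  induction l as [|c l IH]; simpl. tauto.
  intros [->|Hb]. apply Rmax_l. eapply Rle_trans. apply IH; auto. apply Rmax_r.
Qed.
Lemma fold_max_lt {T} (f : T -> R) l c : (forall b, In b l -> f b < c) -> 0 < c ->
  fold_right Rmax 0 (map f l) < c.
Proof.
  induction l as [|d l IH]; simpl; intros H Hc. auto.
  apply Rmax_lub_lt. apply H; auto. apply IH; auto.
Qed.
Lemma fold_max_nn {T} (f : T -> R) l : 0 <= fold_right Rmax 0 (map f l).
Proof. induction l; simpl. lra. eapply Rle_trans. apply IHl. apply Rmax_r. Qed.

Lemma fwd (X : Type) (mu : BRW X) (Hprob : is_prob_law mu) (Hglob : forall x, qbar mu x < 1) :
  (exists x y, q mu x y <> qbar mu x) ->
  (exists (A : list X), A <> nil /\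
     exists v : X -> R,
       (forall x, 0 <= v x <= 1) /\
       (forall x, qbar mu x <= v x) /\
       (forall x, ~ In x A -> G mu v x >= v x) /\
       (exists x0, ~ In x0 A /\
          forall a, In a A -> tau mu v a < tau mu v x0)).
Proof.
  intros [x [y Hq]].
  pose proof (G_good X mu Hprob) as GG.
  assert (Hex : exists x0, qbar mu x0 < fl X mu y x0).
  { apply NNPP. intro Hn. apply Hq.
    assert (Hle : forall z, fl X mu y z <= qbar mu z).
    { intro z. apply Rnot_lt_le. intro Hz. apply Hn. exists z. auto. }
    rewrite q_repr by auto. apply limR_eq.
    apply (squeeze (fun n => Gn mu n (fun _ => 0) x) _ (fun _ => qbar mu x)).
    - intro n. rewrite Gn_iter by auto. split.
      + apply (gmono _ _ (iter_good X _ GG n)). apply zero_inS. apply fl_inS; auto.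
        intro z. apply (fl_inS X mu Hprob y z).
      + rewrite <- (Gi_qbar X mu Hprob n x).
        apply (gmono _ _ (iter_good X _ GG n)). apply fl_inS; auto. apply qbar_inS; auto. exact Hle.
    - apply qbar_cv; auto.
    - apply cv_const. }
  destruct Hex as [x0 Hx0].
  pose proof (fl_inS X mu Hprob y) as Hfl. pose proof (qbar_inS X mu Hprob) as Hqb.
  exists (y :: nil). split. discriminate.
  exists (fun z => Rmax (fl X mu y z) (qbar mu z)). split; [|split; [|split]].
  - intro z. specialize (Hfl z). specialize (Hqb z). split.
    + eapply Rle_trans. 2: apply Rmax_l. lra.
    + apply Rmax_lub; lra.
  - intro z. apply Rmax_r.
  - intros z Hz. assert (Hzy : z <> y). { intro E. apply Hz. left. auto. }
    apply Rle_ge. apply Rmax_lub.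
    + rewrite <- (fl_fix X mu Hprob y z Hzy). apply (gmono _ _ GG); auto.
      intro w. split. eapply Rle_trans. 2: apply Rmax_l. apply Hfl. apply Rmax_lub. apply Hfl. apply Hqb.
      intro w. apply Rmax_l.
    + rewrite <- (qbar_fix X mu Hprob z). apply (gmono _ _ GG); auto.
      intro w. split. eapply Rle_trans. 2: apply Rmax_l. apply Hfl. apply Rmax_lub. apply Hfl. apply Hqb.
      intro w. apply Rmax_r.
  - exists x0. split.
    + intros [E|[]]. subst. rewrite (fl_self X mu Hprob) in Hx0. specialize (Hqb x0). lra.
    + intros a [<-|[]]. unfold tau. rewrite (fl_self X mu Hprob).
      rewrite Rmax_right by (apply Hqb). unfold Rminus at 1. rewrite Rplus_opp_r.
      unfold Rdiv. rewrite Rmult_0_l. apply Rdiv_lt_0_compat.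
      * pose proof (Rmax_l (fl X mu y x0) (qbar mu x0)). lra.
      * specialize (Hglob x0). lra.
Qed.

Section Hop.
Variable X : Type.
Variable eqdec : forall x y : X, {x = y} + {x <> y}.
Variable mu : BRW X.
Hypothesis Hprob : is_prob_law mu.
Variable A : list X.

Definition Hf (z : X -> R) (x : X) : R :=
  if in_dec eqdec x A then z x else G mu z x.

Lemma H_good : goodT X Hf.
Proof.
  pose proof (G_good X mu Hprob) as GG.
  constructor; unfold Hf.
  - intros z Hz x. destruct (in_dec eqdec x A); auto. apply (gpres _ _ GG); auto.
  - intros z z' Hz Hz' Hl x. destruct (in_dec eqdec x A); auto. apply (gmono _ _ GG); auto.
  - intros z0 z1 t H0 H1 Hl Ht x. unfold cmb. destruct (in_dec eqdec x A). lra.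
    apply (gconv _ _ GG); auto.
  - intros z zi Hz Hzi Hcv x. destruct (in_dec eqdec x A); auto. apply (gcont _ _ GG); auto.
Qed.

Lemma Hi_A n z b : In b A -> iterT X Hf n z b = z b.
Proof.
  intro Hb. induction n; simpl; auto. unfold Hf at 1. destruct (in_dec eqdec b A); tauto.
Qed.

End Hop.

Lemma bwd (X : Type) (eqdec : forall x y : X, {x = y} + {x <> y}) (mu : BRW X)
  (Hprob : is_prob_law mu) (Hglob : forall x, qbar mu x < 1)
  (A : list X) (HA : A <> nil) (v : X -> R)
  (Hv : forall x, 0 <= v x <= 1) (Hvq : forall x, qbar mu x <= v x)
  (Hsub : forall x, ~ In x A -> G mu v x >= v x)
  (x0 : X) (Hx0 : ~ In x0 A) (Htau : forall a, In a A -> tau mu v a < tau mu v x0) :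
  exists x y, q mu x y <> qbar mu x.
Proof.
  apply NNPP. intro Hn.
  assert (Hs : forall x y, q mu x y = qbar mu x).
  { intros x y. apply NNPP. intro E. apply Hn. exists x, y. auto. }
  pose proof (G_good X mu Hprob) as GG.
  pose proof (qbar_inS X mu Hprob) as Hqb.
  destruct A as [|a A']. { exfalso; auto. }
  set (A := a :: A') in *.
  assert (HaA : In a A) by (left; auto).
  pose proof (fl_inS X mu Hprob a) as Hfl.
  pose proof (fl_sub X mu Hprob a) as Hfs.
  set (Gi := iterT X (G mu)).
  assert (IG : forall n, goodT X (Gi n)) by (intro; apply iter_good; auto).
  assert (Hfle : forall z, fl X mu a z <= qbar mu z).
  { assert (Hgr : forall n z, Gi n (fl X mu a) z <= Gi (S n) (fl X mu a) z).
    { intros n z. replace (S n) with (n + 1)%nat by lia. unfold Gi. rewrite iter_add.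
      apply (gmono _ _ (IG n)); auto; simpl; try apply (gpres _ _ GG); auto. }
    intro z. rewrite <- (Hs z a). rewrite q_repr by auto.
    assert (Hc := grow_cv (fun n => Gi n (fl X mu a) z) 1 (fun n => Hgr n z)
                   (fun n => proj2 (gpres _ _ (IG n) _ Hfl z))).
    apply (growing_ineq _ _ (fun n => Hgr n z) Hc 0%nat). }
  assert (Htnn : forall b, 0 <= tau mu v b).
  { intro b. unfold tau. specialize (Hglob b). specialize (Hvq b). unfold Rdiv. apply Rmult_le_pos. lra. left. apply Rinv_0_lt_compat. lra. }
  set (M := fold_right Rmax 0 (map (tau mu v) A)).
  assert (HM0 : 0 <= M) by apply fold_max_nn.
  assert (HMb : forall b, In b A -> tau mu v b <= M) by (intros; apply fold_max_ge; auto).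
  assert (HMx : M < tau mu v x0).
  { apply fold_max_lt; auto. specialize (Htau a HaA). specialize (Htnn a). lra. }
  assert (Htx1 : tau mu v x0 <= 1).
  { unfold tau. specialize (Hglob x0). specialize (Hv x0). apply Rmult_le_reg_r with (1 - qbar mu x0). lra.
    unfold Rdiv. rewrite Rmult_assoc, Rinv_l by lra. lra. }
  assert (HM1 : M < 1) by lra.
  set (qm := fold_right Rmax 0 (map (qbar mu) A)).
  assert (Hqm : qm < 1) by (apply fold_max_lt; auto; intros; lra).
  assert (Hqm0 : 0 <= qm) by apply fold_max_nn.
  set (rho := M + (1 - M) * qm).
  assert (Hr1 : rho < 1) by (unfold rho; nra).
  assert (Hr0 : 0 <= rho) by (unfold rho; nra).
  set (one := fun _ : X => 1).
  set (w := cmb M one (qbar mu)).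
  assert (Hw : inS w) by (apply cmb_inS; auto; [lra | apply one_inS]).
  assert (Hwr : forall b, In b A -> w b <= rho).
  { intros b Hb. unfold w, cmb, rho, one. pose proof (fold_max_ge (qbar mu) A b Hb). fold qm in H. nra. }
  assert (Hvw : forall b, In b A -> v b <= w b).
  { intros b Hb. specialize (HMb b Hb). unfold tau in HMb. specialize (Hglob b).
    apply div_le_inv in HMb; [|lra]. unfold w, cmb, one. lra. }
  assert (Hvw0 : w x0 < v x0).
  { unfold tau in HMx. specialize (Hglob x0). apply div_gt_inv in HMx; [|lra]. unfold w, cmb, one. lra. }
  assert (Hqw : fle (qbar mu) w). { intro z. unfold w, cmb, one. specialize (Hqb z). nra. }
  set (H := Hf X eqdec mu A).
  assert (HG : goodT X H) by (apply H_good; auto).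
  set (Hi := iterT X H).
  assert (IH : forall n, goodT X (Hi n)) by (intro; apply iter_good; auto).
  assert (HiA : forall n z b, In b A -> Hi n z b = z b) by (intros; apply Hi_A; auto).
  assert (Hone : forall n, fle (Hi n one) one).
  { intros n z. apply (gpres _ _ (IH n)). apply one_inS. }
  set (zeta := fun z => if in_dec eqdec z A then w z else 1).
  assert (Hz : inS zeta). { intro z. unfold zeta. destruct (in_dec eqdec z A). apply Hw. lra. }
  assert (Hvz : fle v zeta). { intro z. unfold zeta. destruct (in_dec eqdec z A). auto. apply Hv. }
  assert (HvH : fle v (H v)).
  { intro z. unfold H, Hf. destruct (in_dec eqdec z A). lra. apply Rge_le. auto. }
  assert (Hvn : forall n, fle v (Hi n v)).
  { induction n; intro z. unfold Hi; simpl; lra. change (v z <= H (Hi n v) z).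
    eapply Rle_trans. apply HvH. apply (gmono _ _ HG); auto. apply (gpres _ _ (IH n)); auto. }
  assert (Hzd : fle (H zeta) zeta).
  { intro z. unfold H, Hf. destruct (in_dec eqdec z A). lra. unfold zeta at 2.
    destruct (in_dec eqdec z A). tauto. apply (gpres _ _ GG); auto. }
  set (an := fun n => Hi n zeta x0).
  assert (Hand : forall n, an (S n) <= an n).
  { intro n. unfold an. replace (S n) with (n + 1)%nat by lia. unfold Hi. rewrite iter_add.
    apply (gmono _ _ (IH n)); auto. simpl. apply (gpres _ _ HG); auto. }
  assert (Hcva : Un_cv an (limR an)).
  { apply (decr_cv _ 0); auto. intro n. apply (gpres _ _ (IH n) _ Hz x0). }
  set (ainf := limR an).
  assert (Hva : v x0 <= ainf).
  { apply (cv_ge_const an); auto. intro n. unfold an. eapply Rle_trans. apply Hvn.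
    apply (gmono _ _ (IH n)); auto. }
  set (ind1 := fun z => if in_dec eqdec z A then 0 else 1).
  assert (Hi1 : inS ind1). { intro z. unfold ind1. destruct (in_dec eqdec z A); lra. }
  set (g := fun m => Hi m ind1).
  assert (HgS : forall m, inS (g m)) by (intro; apply (gpres _ _ (IH m)); auto).
  assert (HgF : forall m, fle (g m) (F mu a m)).
  { induction m; intro z.
    - change (ind1 z <= Defs.ind (z <> a)). unfold ind1. destruct (in_dec eqdec z A).
      apply ind_bounds. rewrite ind_true. lra. intro E. subst. tauto.
    - change (H (g m) z <= F mu a (S m) z). unfold H, Hf. destruct (in_dec eqdec z A).
      + unfold g. rewrite HiA by auto. unfold ind1. destruct (in_dec eqdec z A); [|tauto].
        apply (F_inS X mu Hprob).
      + simpl. rewrite ind_true by (intro E; subst; tauto). rewrite Rmult_1_l.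
        apply (gmono _ _ GG); auto. apply F_inS; auto. }
  set (sig := fun m z => if in_dec eqdec z A then w z else rho + (1 - rho) * g m z).
  assert (Hsig : forall m, inS (sig m)).
  { intros m z. unfold sig. destruct (in_dec eqdec z A). apply Hw. specialize (HgS m z). nra. }
  assert (Hzr : forall m, fle (Hi m zeta) (sig m)).
  { intros m z. unfold sig. destruct (in_dec eqdec z A) as [Hin|Hout].
    - rewrite HiA by auto. unfold zeta. destruct (in_dec eqdec z A); tauto || lra.
    - assert (E : (fun z => if in_dec eqdec z A then rho else 1) = cmb rho one ind1).
      { apply functional_extensionality. intro y. unfold cmb, one, ind1.
        destruct (in_dec eqdec y A); ring. }
      eapply Rle_trans.
      + apply (gmono _ _ (IH m) zeta (fun z => if in_dec eqdec z A then rho else 1)); auto.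
        * intro y. destruct (in_dec eqdec y A); lra.
        * intro y. unfold zeta. destruct (in_dec eqdec y A); auto. lra.
      + rewrite E. eapply Rle_trans. apply (gconv _ _ (IH m)); auto. apply one_inS.
        intro y; unfold ind1, one; destruct (in_dec eqdec y A); lra. lra.
        unfold cmb. pose proof (Hone m z). unfold one in H0 |- *.
        unfold g. apply Rplus_le_compat_r. rewrite <- (Rmult_1_r rho) at 2.
        apply Rmult_le_compat_l; lra. }
  set (tp := fun m z => if in_dec eqdec z A then w z else F mu a m z).
  assert (Htp : forall m, inS (tp m)).
  { intros m z. unfold tp. destruct (in_dec eqdec z A). apply Hw. apply F_inS; auto. }
  assert (Htpz : forall m, fle (tp m) zeta).
  { intros m z. unfold tp, zeta. destruct (in_dec eqdec z A). lra. apply F_inS; auto. }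
  assert (Hsc : forall m, fle (sig m) (cmb rho zeta (tp m))).
  { intros m z. unfold sig, cmb, zeta, tp. destruct (in_dec eqdec z A). lra.
    specialize (HgF m z). nra. }
  assert (Hkey : forall n m, an (m + n)%nat <= rho * an n + (1 - rho) * Hi n (tp m) x0).
  { intros n m. unfold an. rewrite Nat.add_comm. unfold Hi. rewrite iter_add. fold Hi.
    eapply Rle_trans. apply (gmono _ _ (IH n)). apply (gpres _ _ (IH m)); auto. apply Hsig. apply Hzr.
    eapply Rle_trans. apply (gmono _ _ (IH n) (sig m) (cmb rho zeta (tp m))). apply Hsig. apply cmb_inS; [lra|auto|auto]. apply Hsc.
    apply (gconv _ _ (IH n)); auto; try lra. }
  set (ti := fun z => if in_dec eqdec z A then w z else fl X mu a z).
  assert (Hti : inS ti). { intro z. unfold ti. destruct (in_dec eqdec z A). apply Hw. apply Hfl. }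
  assert (Htcv : forall z, Un_cv (fun m => tp m z) (ti z)).
  { intro z. unfold tp, ti. destruct (in_dec eqdec z A). apply cv_const. apply fl_cv; auto. }
  assert (HHw : fle (H w) w).
  { intro z. unfold H, Hf. destruct (in_dec eqdec z A). lra. unfold w.
    eapply Rle_trans. apply (gconv _ _ GG); auto. apply one_inS. intro y. apply Hqb. lra.
    unfold cmb, one. rewrite G_one by auto. rewrite qbar_fix by auto. lra. }
  assert (Hiw : forall n, fle (Hi n w) w).
  { induction n; intro z. unfold Hi; simpl; lra. change (H (Hi n w) z <= w z).
    eapply Rle_trans. apply (gmono _ _ HG (Hi n w) w); [apply (gpres _ _ (IH n)); auto | auto | apply IHn]. apply HHw. }
  assert (Htiw : fle ti w).
  { intro z. unfold ti. destruct (in_dec eqdec z A). lra. eapply Rle_trans. apply Hfle. apply Hqw. }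
  assert (Hstep : forall n, ainf <= rho * an n + (1 - rho) * w x0).
  { intro n.
    assert (L : ainf <= rho * an n + (1 - rho) * Hi n ti x0).
    { apply (@Rle_cv_lim (fun m => an (m + n)%nat) (fun m => rho * an n + (1 - rho) * Hi n (tp m) x0)).
      - intro m. apply Hkey.
      - apply cv_shift. auto.
      - apply CV_plus. apply cv_const. apply CV_mult. apply cv_const.
        apply (gcont _ _ (IH n)); auto. }
    assert (Hiti : Hi n ti x0 <= w x0).
    { eapply Rle_trans. apply (gmono _ _ (IH n) ti w); [exact Hti | exact Hw | exact Htiw]. apply Hiw. }
    nra. }
  assert (Hfin : ainf <= rho * ainf + (1 - rho) * w x0).
  { apply (@Rle_cv_lim (fun _ => ainf) (fun n => rho * an n + (1 - rho) * w x0)); auto.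
    apply cv_const. apply CV_plus. apply CV_mult. apply cv_const. auto. apply cv_const. }
  assert (ainf <= w x0) by nra.
  lra.
Qed.

Theorem mainTheorem4
  (X : Type) (enc : X -> nat) (Henc : forall x y, enc x = enc y -> x = y)
  (eqdec : forall x y : X, {x = y} + {x <> y})
  (mu : BRW X)
  (Hprob : is_prob_law mu)
  (Hmom : bounded_moments eqdec mu)
  (Hirr : irreducible eqdec mu)
  (Hstand : standing_assumption eqdec mu)
  (Hglob : forall x, qbar mu x < 1) :
  (exists x y, q mu x y <> qbar mu x) <->
  (exists (A : list X), A <> nil /\
     exists v : X -> R,
       (forall x, 0 <= v x <= 1) /\
       (forall x, qbar mu x <= v x) /\
       (forall x, ~ In x A -> G mu v x >= v x) /\
       (exists x0, ~ In x0 A /\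
          forall a, In a A -> tau mu v a < tau mu v x0)).
Proof.
  split.
  - apply fwd; auto.
  - intros [A [HA [v [Hv [Hvq [Hsub [x0 [Hx0 Htau]]]]]]]].
    apply (bwd X eqdec mu Hprob Hglob A HA v Hv Hvq Hsub x0 Hx0 Htau).
Qed.
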